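(* In the setting below, for all limit ordinals $\alpha<\beta$ and all natural numbers $n\geq0$, $M_{\alpha+n}\subseteq M_{\beta+n}$.
   Context: Work in ZFA (ZF with a set $A$ of atoms, i.e. urelements that have no elements), extended by a primitive binary relation $\preccurlyeq$ on $A$, with Separation and Replacement holding for formulas mentioning $\preccurlyeq$. $A$ is an infinite set of atoms and $\preccurlyeq$ is a pre-ordering (reflexive, transitive) on $A$ with no minimal elements: for every $a\in A$ there is $b\in A$ with $b\preccurlyeq a$ and not $a\preccurlyeq b$. For $a\in A$, $pr(a)=\{b\in A:b\preccurlyeq a\}$; $LO(A,\preccurlyeq)$ is the set of nonempty $x\subseteq A$ with $pr(a)\subseteq x$ for all $a\in x$. For a set $X$ of sets, $LO(X,\subseteq)$ is the set of nonempty $x\subseteq X$ such that for every $y\in x$ and every $z\in X$ with $z\subseteq y$, $z\in x$. The magmatic hierarchy: $M_1=LO(A,\preccurlyeq)$; $M_{\alpha+1}=LO(M_\alpha,\subseteq)$ for $\alpha\geq1$; $M_\alpha=\bigcup_{1\leq\beta<\alpha}M_\beta$ for limit $\alpha$; $M=\bigcup_{\alpha\geq1}M_\alpha$. Limit ordinals are nonzero. *)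

(* Defs.v *)
(* A model of ZFA-style sets with atoms (Aczel-style
   well-founded trees with urelements, modulo extensional equality), and
   ordinals represented as elements of an arbitrary well-ordered type. *)
From Stdlib Require Import List Relations Wellfounded.

Set Implicit Arguments.

Inductive V (A : Type) : Type :=
| Atom : A -> V A
| Sett : forall I : Type, (I -> V A) -> V A.

Arguments Atom {A} _.
Arguments Sett {A} _ _.

Section ZFA.
Variable A : Type.

Fixpoint eqV (x y : V A) {struct x} : Prop :=
  match x, y with
  | Atom a, Atom b => a = b
  | @Sett _ I0 f, @Sett _ J g =>
      (forall i, exists j, eqV (f i) (g j)) /\
      (forall j, exists i, eqV (f i) (g j))
  | _, _ => False
  end.

Definition memV (x y : V A) : Prop :=
  match y with
  | Atom _ => False
  | @Sett _ I0 f => exists i, eqV x (f i)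
  end.

Definition subV (z y : V A) : Prop := forall w, memV w z -> memV w y.

Definition isSet (x : V A) : Prop :=
  match x with @Sett _ _ _ => True | Atom _ => False end.

Definition LO_atoms (le : A -> A -> Prop) (x : V A) : Prop :=
  isSet x /\ (exists w, memV w x) /\
  (forall w, memV w x -> exists a, eqV w (Atom a)) /\
  (forall a b, memV (Atom a) x -> le b a -> memV (Atom b) x).

Definition LO_sub (X : V A -> Prop) (x : V A) : Prop :=
  isSet x /\ (exists w, memV w x) /\
  (forall w, memV w x -> X w) /\
  (forall y z, memV y x -> X z -> subV z y -> memV z x).
End ZFA.

Record wordType := WordType {
  wsort :> Type;
  wlt : wsort -> wsort -> Prop;
  wlt_wf : well_founded wlt;
  wlt_trans : forall x y z, wlt x y -> wlt y z -> wlt x z;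
  wlt_total : forall x y, wlt x y \/ x = y \/ wlt y x
}.
Arguments wlt {w} _ _.

Section Ord.
Variable T : wordType.

Definition is_zero (t : T) : Prop := forall s : T, ~ wlt s t.
Definition is_succ (s t : T) : Prop :=
  wlt s t /\ forall u : T, ~ (wlt s u /\ wlt u t).
Definition is_one (t : T) : Prop := exists s : T, is_zero s /\ is_succ s t.
Definition is_limit (t : T) : Prop := ~ is_zero t /\ ~ (exists s : T, is_succ s t).

Fixpoint is_add (a : T) (n : nat) (t : T) : Prop :=
  match n with
  | O => t = a
  | S m => exists s : T, is_add a m s /\ is_succ s t
  end.
End Ord.
Arguments is_zero {T} _.
Arguments is_succ {T} _ _.
Arguments is_one {T} _.
Arguments is_limit {T} _.
Arguments is_add {T} _ _ _.

(** * The magmatic hierarchy, indexed by T (index 0 unused) *)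
Definition mag_step (A : Type) (le : A -> A -> Prop) (T : wordType)
  (t : T) (rec : forall s : T, wlt s t -> V A -> Prop) (x : V A) : Prop :=
  (is_one t /\ LO_atoms le x) \/
  (exists s (h : wlt s t), is_succ s t /\ ~ is_zero s /\ LO_sub (rec s h) x) \/
  (is_limit t /\ exists s (h : wlt s t), ~ is_zero s /\ rec s h x).

Definition Mag (A : Type) (le : A -> A -> Prop) (T : wordType) : T -> V A -> Prop :=
  Fix (@wlt_wf T) (fun _ => V A -> Prop) (@mag_step A le T).
Arguments Mag {A} le {T} _ _.

(* Main.v *)
Require Import Defs.
From Stdlib Require Import List.
From Stdlib Require Import FunctionalExtensionality.

Section Proof.
Set Implicit Arguments.
Variable A : Type.
Variable le : A -> A -> Prop.
Variable T : wordType.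

Definition leT (x y : T) := wlt x y \/ x = y.

Lemma Mag_eq (t : T) : Mag le t = @mag_step A le T t (fun s _ => Mag le s).
Proof.
  unfold Mag. apply (Fix_eq (@wlt_wf T) (fun _ => V A -> Prop) (@mag_step A le T)). intros x f g H.
  assert (f = g) as ->; [|reflexivity].
  apply functional_extensionality_dep; intro s.
  apply functional_extensionality_dep; intro h. apply H.
Qed.

Lemma Mag_inv (t : T) x : Mag le t x ->
  (is_one t /\ LO_atoms le x) \/
  (exists s, is_succ s t /\ ~ is_zero s /\ LO_sub (Mag le s) x) \/
  (is_limit t /\ exists s, wlt s t /\ ~ is_zero s /\ Mag le s x).
Proof.
  rewrite Mag_eq. unfold mag_step.
  intros [H|[[s [h H]]|[H [s [h H']]]]]; eauto 10.
Qed.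

Lemma Mag_one (t : T) x : is_one t -> LO_atoms le x -> Mag le t x.
Proof. intros. rewrite Mag_eq. left; auto. Qed.

Lemma Mag_succ (s t : T) x : is_succ s t -> ~ is_zero s -> LO_sub (Mag le s) x -> Mag le t x.
Proof. intros H1 H2 H3. rewrite Mag_eq. right; left. exists s, (proj1 H1). auto. Qed.

Lemma Mag_lim (s t : T) x : is_limit t -> wlt s t -> ~ is_zero s -> Mag le s x -> Mag le t x.
Proof. intros H1 H2 H3 H4. rewrite Mag_eq. right; right. split; auto. exists s, H2. auto. Qed.

Lemma succ_unique (s s' t : T) : is_succ s t -> is_succ s' t -> s = s'.
Proof.
  intros [h1 H1] [h2 H2].
  destruct (@wlt_total T s s') as [l|[e|l]]; auto.
  - exfalso; apply (H1 s'); auto.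
  - exfalso; apply (H2 s); auto.
Qed.

Lemma Mag_isSet (t : T) x : Mag le t x -> isSet x.
Proof.
  revert x. induction t as [t IH] using (well_founded_ind (@wlt_wf T)).
  intros x H. apply Mag_inv in H.
  destruct H as [[_ [H _]]|[[s [_ [_ [H _]]]]|[_ [s [h [_ H]]]]]]; auto.
  eapply IH; eauto.
Qed.

Lemma Mag_ne (t : T) x : Mag le t x -> exists w, memV w x.
Proof.
  revert x. induction t as [t IH] using (well_founded_ind (@wlt_wf T)).
  intros x H. apply Mag_inv in H.
  destruct H as [[_ [_ [H _]]]|[[s [_ [_ [_ [H _]]]]]|[_ [s [h [_ H]]]]]]; auto.
  eapply IH; eauto.
Qed.

Lemma atom_lemma (d : T) u : Mag le d u ->
  (exists c a, memV c u /\ eqV c (Atom a)) -> LO_atoms le u.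
Proof.
  revert u. induction d as [d IH] using (well_founded_ind (@wlt_wf T)).
  intros u H [c [a [Hc Ha]]]. apply Mag_inv in H.
  destruct H as [[_ H]|[[s [_ [_ [_ [_ [H _]]]]]]|[_ [s [h [_ H]]]]]]; auto.
  - apply H in Hc. apply Mag_isSet in Hc. destruct c; simpl in *; tauto.
  - eapply IH; eauto.
Qed.

Lemma mainL : forall e : T, forall g d : T, leT g e -> leT d e ->
  forall u w, Mag le d u -> Mag le g w -> subV u w -> Mag le g u.
Proof.
  intro e. induction e as [e IHe] using (well_founded_ind (@wlt_wf T)).
  intro g. induction g as [g IHg] using (well_founded_ind (@wlt_wf T)).
  intro d. induction d as [d IHd] using (well_founded_ind (@wlt_wf T)).
  intros Hg Hd u w Hu Hw Huw.
  pose proof Hw as Hw'. apply Mag_inv in Hw'.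
  destruct Hw' as [[Hone Hat]|[[g' [Hsg [Hg'0 Hlo]]]|[Hlim [g' [hg' [Hg'0 Hw1]]]]]].
  - apply Mag_one; auto. apply (@atom_lemma d); auto.
    destruct (@Mag_ne _ _ Hu) as [c Hc]. destruct Hat as [_ [_ [Hat _]]].
    destruct (Hat c (Huw c Hc)) as [a Ha]. eauto.
  - pose proof Hu as Hu'. apply Mag_inv in Hu'.
    destruct Hu' as [[Hone Hat]|[[d' [Hsd [Hd'0 Hlou]]]|[Hlim [d' [hd' [Hd'0 Hu1]]]]]].
    + exfalso. destruct Hat as [_ [[c Hc] [Hat _]]].
      destruct (Hat c Hc) as [a Ha].
      destruct Hlo as [_ [_ [Hm _]]]. pose proof (Hm c (Huw c Hc)) as Hc2.
      apply Mag_isSet in Hc2. destruct c; simpl in *; tauto.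
    + apply (Mag_succ Hsg Hg'0).
      destruct Hlou as [Hs [Hne [Hm Hdown]]].
      destruct Hlo as [_ [_ [Hmw _]]].
      split; [exact Hs|split; [exact Hne|split]].
      * intros a Ha. apply Hmw, Huw, Ha.
      * intros a b Ha Hb Hba. apply (Hdown a b Ha); auto.
        assert (Hg'e : wlt g' e).
        { destruct Hg as [Hg|Hg]; [eapply (@wlt_trans T); [exact (proj1 Hsg)|exact Hg]|subst; exact (proj1 Hsg)]. }
        assert (Hd'e : wlt d' e).
        { destruct Hd as [Hd|Hd]; [eapply (@wlt_trans T); [exact (proj1 Hsd)|exact Hd]|subst; exact (proj1 Hsd)]. }
        destruct (@wlt_total T g' d') as [l|[eq|l]].
        -- apply (IHe d' Hd'e d' g' (or_intror eq_refl) (or_introl l) b a); auto.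
        -- subst. apply (IHe d' Hd'e d' d' (or_intror eq_refl) (or_intror eq_refl) b a); auto.
        -- apply (IHe g' Hg'e d' g' (or_introl l) (or_intror eq_refl) b a); auto.
    + apply (IHd d' hd' Hg) with (w := w); auto.
      destruct Hd as [Hd|Hd]; [left; eapply (@wlt_trans T); eauto|subst; left; auto].
  - eapply Mag_lim; [exact Hlim|exact hg'|exact Hg'0|].
    apply (IHg g' hg' d) with (w := w); auto.
    destruct Hg as [Hg|Hg]; [left; eapply (@wlt_trans T); eauto|subst; left; auto].
Qed.

Lemma add_ge (a : T) n t : is_add a n t -> leT a t.
Proof.
  revert t; induction n as [|n IH]; simpl; intros t H.
  - right; auto.
  - destruct H as [s [Hs [Hst _]]]. left.
    destruct (IH s Hs) as [l|e]; [eapply (@wlt_trans T); eauto|subst; auto].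
Qed.

Lemma add_nz (a : T) n t : ~ is_zero a -> is_add a n t -> ~ is_zero t.
Proof.
  intros Ha H Ht. destruct (@add_ge a n t H) as [l|e].
  - apply (Ht a l).
  - subst; auto.
Qed.

End Proof.

Theorem lemma4p7 (A : Type) (le : A -> A -> Prop)
  (A_infinite : forall l : list A, exists a, ~ In a l)
  (le_refl : forall a, le a a)
  (le_trans : forall a b c, le a b -> le b c -> le a c)
  (no_min : forall a, exists b, le b a /\ ~ le a b)
  (T : wordType) (alpha beta : T)
  (Halpha : is_limit alpha) (Hbeta : is_limit beta) (Hab : wlt alpha beta)
  (n : nat) (an bn : T) (Han : is_add alpha n an) (Hbn : is_add beta n bn) :
  forall x : V A, Mag le an x -> Mag le bn x.
Proof.
  revert an bn Han Hbn. induction n as [|n IH]; simpl; intros an bn Han Hbn x Hx.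
  - subst. apply Mag_inv in Hx.
    destruct Hx as [[[s [Hs Hsucc]] _]|[[s [Hsucc _]]|[_ [s [h [Hs Hx]]]]]].
    + exfalso. apply (proj2 Halpha). eauto.
    + exfalso. apply (proj2 Halpha). eauto.
    + eapply Mag_lim; [exact Hbeta|exact (@wlt_trans T _ _ _ h Hab)|exact Hs|exact Hx].
  - destruct Han as [a' [Ha' Hsa]]. destruct Hbn as [b' [Hb' Hsb]].
    assert (Ha'0 : ~ is_zero a') by (eapply add_nz; [exact (proj1 Halpha)|exact Ha']).
    assert (Hb'0 : ~ is_zero b') by (eapply add_nz; [exact (proj1 Hbeta)|exact Hb']).
    apply Mag_inv in Hx.
    destruct Hx as [[[s [Hs Hsucc]] _]|[[s [Hsucc [_ Hlo]]]|[Hlim _]]].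
    + exfalso. rewrite (@succ_unique T _ _ _ Hsucc Hsa) in Hs. auto.
    + rewrite (@succ_unique T _ _ _ Hsucc Hsa) in Hlo.
      eapply Mag_succ; [exact Hsb|exact Hb'0|].
      destruct Hlo as [Hs [Hne [Hm Hdown]]].
      split; [exact Hs|split; [exact Hne|split]].
      * intros w Hw. apply (IH a' b' Ha' Hb'), Hm, Hw.
      * intros y z Hy Hz Hzy. apply (Hdown y z Hy); auto.
        destruct (@wlt_total T a' b') as [l|[eq|l]].
        -- apply (@mainL A le T b' a' b' (or_introl l) (or_intror eq_refl) z y); auto.
        -- subst. apply (@mainL A le T b' b' b' (or_intror eq_refl) (or_intror eq_refl) z y); auto.
        -- apply (@mainL A le T a' a' b' (or_intror eq_refl) (or_introl l) z y); auto.
    + exfalso. apply (proj2 Hlim). eauto.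
Qed.
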